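(* Let $\Lambda\subset\mathbb{C}$ be a lattice, $p,q\ge2$ integers, $r\ge1$, and $U(z)=\exp(\zeta(pqz,\Lambda)N_r)$. Then $$A_r^{sp}(z)=U(z/p)\,T_r^{sp}\,U(z)^{-1},\qquad T_r^{sp}=\mathrm{diag}[1,p,\dots,p^{r-1}].$$
   Context: $\zeta(z,\Lambda)$ is the Weierstrass zeta function of $\Lambda$; $N_r$ is the $r\times r$ matrix with $1$ at positions $(i,i+1)$ and $0$ elsewhere. $g_p(z)=p\zeta(qz,\Lambda)-\zeta(pqz,\Lambda)$. $A_r^{sp}(z)=(a_{ij})$ is the $r\times r$ matrix with $a_{ij}=0$ for $j<i$ and $a_{ij}=\frac{p^{i-1}}{(j-i)!}g_p(z)^{j-i}$ for $i\le j$. *)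

(* Defs.v *)
From mathcomp Require Import all_boot all_order all_algebra.
From mathcomp Require Import complex reals.
From Stdlib Require Import ClassicalEpsilon.
Import Order.TTheory GRing.Theory Num.Theory.
Set Implicit Arguments. Unset Strict Implicit. Unset Printing Implicit Defensive.
Local Open Scope ring_scope.

Section Defs.
Variable R : realType.
Local Notation C := R[i].

Definition ccvg_to (u : nat -> C) (l : C) : Prop :=
  forall e : R, 0 < e -> exists N : nat, forall n : nat, (N <= n)%N -> `|u n - l| < (e%:C)%C.

(* the limit of a complex sequence (arbitrary value if it does not converge) *)
Definition climit (u : nat -> C) : C :=
  epsilon (inhabits (0 : C)) (fun l => ccvg_to u l).

(* the lattice Lambda = Z w1 + Z w2, with w1, w2 R-linearly independent *)
Definition is_lattice_basis (w1 w2 : C) : Prop := w1 != 0 /\ 'Im (w2 / w1) != 0.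
Definition lat (w1 w2 : C) (m n : int) : C := m%:~R * w1 + n%:~R * w2.
Definition in_lattice (w1 w2 : C) (z : C) : Prop := exists m n : int, z = lat w1 w2 m n.

(* square partial sums of the Weierstrass zeta series over |m|,|n| <= N, (m,n) <> 0 *)
Definition wzeta_partial (w1 w2 z : C) (N : nat) : C :=
  \sum_(i < (N.*2).+1) \sum_(j < (N.*2).+1)
    (let m := (i%:Z - N%:Z)%R in let n := (j%:Z - N%:Z)%R in
     if (m == 0) && (n == 0) then 0
     else let w := lat w1 w2 m n in (z - w)^-1 + w^-1 + z / w ^+ 2).

Definition wzeta (w1 w2 z : C) : C := z^-1 + climit (wzeta_partial w1 w2 z).

(* N_r : 1 at (i, i+1), 0 elsewhere (0-based indices) *)
Definition Nmx (r : nat) : 'M[C]_r := \matrix_(i, j) ((j : nat) == i.+1)%:R.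

Definition expmx (r : nat) (A : 'M[C]_r) : 'M[C]_r :=
  \matrix_(i, j) climit (fun K => (\sum_(k < K) (k`!%:R)^-1 *: A ^+ k) i j).

Definition Umx (w1 w2 : C) (p q r : nat) (z : C) : 'M[C]_r :=
  expmx (wzeta w1 w2 (p%:R * q%:R * z) *: Nmx r).

Definition Tsp (p r : nat) : 'M[C]_r :=
  \matrix_(i, j) (if i == j then (p%:R : C) ^+ i else 0).

Definition gp (w1 w2 : C) (p q : nat) (z : C) : C :=
  p%:R * wzeta w1 w2 (q%:R * z) - wzeta w1 w2 (p%:R * q%:R * z).

(* A_r^sp(z): a_ij = p^(i-1)/(j-i)! g_p(z)^(j-i) for i <= j (1-based), 0 otherwise *)
Definition Asp (w1 w2 : C) (p q r : nat) (z : C) : 'M[C]_r :=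
  \matrix_(i, j) (if (i <= j)%N
                  then (p%:R : C) ^+ i / ((j - i)%N`!)%:R * (gp w1 w2 p q z) ^+ (j - i)%N
                  else 0).
End Defs.
Arguments Nmx {R} r.
Arguments Tsp {R} p r.

(* Main.v *)
Require Import Defs.
From mathcomp Require Import all_boot all_order all_algebra.
From mathcomp Require Import complex reals.
From Stdlib Require Import ClassicalEpsilon.
From mathcomp Require Import zify ring.
Import Order.TTheory GRing.Theory Num.Theory.
Local Open Scope ring_scope.
Section S. Variable R : realType. Local Notation C := R[i].

Lemma climit_ev (u : nat -> C) c N :
  (forall n, (N <= n)%N -> u n = c) -> climit u = c.
Proof.
move=> Hu.
have H : ccvg_to u c.
  move=> e e0; exists N => n Hn; rewrite Hu // subrr normr0 ltcR //.
rewrite /climit; set l := epsilon _ _.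
have Hl : ccvg_to u l := epsilon_spec (inhabits 0) _ (ex_intro _ c H).
apply/eqP; rewrite eq_sym; apply/negPn/negP => ne.
have := normc_def (c - l); set s := Num.Def.sqrtr _ => ds.
have : 0 < `|c - l| by rewrite normr_gt0 subr_eq0.
rewrite ds (_ : 0 = 0%:C)%C // ltcR => s0.
have e0 : 0 < s / 2 by rewrite divr_gt0.
have [N1 H1] := H _ e0; have [N2 H2] := Hl _ e0.
have := ler_distD (u (maxn N1 N2)) c l.
rewrite ds (distrC c).
have h1 := H1 (maxn N1 N2) (leq_maxl _ _).
have h2 := H2 (maxn N1 N2) (leq_maxr _ _).
have := ltrD h1 h2 => lt le.
have lt2 : `|u (maxn N1 N2) - c| + `|u (maxn N1 N2) - l| < s%:C%C.
  by apply: (lt_le_trans lt); rewrite -rmorphD lecR -splitr.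

by have := lt_le_trans lt2 le; rewrite ltxx.
Qed.
Definition Emx n (c : C) : 'M[C]_n :=
  \matrix_(i, j) (if (i <= j)%N then c ^+ (j - i) / ((j - i)`!)%:R else 0).

Lemma fact_neq0 m : ((m`!)%:R : C) != 0.
Proof. by rewrite pnatr_eq0 -lt0n fact_gt0. Qed.

Lemma conv (x y : C) (n i j : nat) : (i <= j)%N -> (j < n)%N ->
 \sum_(k < n) ((if (i <= k)%N then x^+(k-i) / ((k-i)`!)%:R else 0) *
    (if (k <= j)%N then y^+(j-k)/((j-k)`!)%:R else 0))
  = (x+y)^+(j-i) / ((j-i)`!)%:R.
Proof.
move=> ij jn.
rewrite -(big_mkord xpredT (fun k => (if (i <= k)%N then x^+(k-i) / ((k-i)`!)%:R else 0) *
    (if (k <= j)%N then y^+(j-k)/((j-k)`!)%:R else 0))).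
rewrite (@big_cat_nat _ _ _ i) //=; last by rewrite (leq_trans ij (ltnW jn)).
rewrite big1_seq ?add0r; last first.
  by move=> k; rewrite mem_index_iota => /andP[_ /andP[_ ki]]; rewrite (leqNgt i k) ki mul0r.
rewrite (@big_cat_nat _ _ _ j.+1) //=.
rewrite [X in _ + X]big1_seq ?addr0; last first.
  by move=> k; rewrite mem_index_iota => /andP[_ /andP[jk _]]; rewrite (leqNgt k j) jk mulr0.
rewrite -{1}(add0n i) big_addn.
rewrite (eq_big_nat _ _ (F2 := fun k => x^+k / (k`!)%:R * (y^+((j - i) - k) / (((j-i)-k)`!)%:R))); last first.
  move=> k /andP[_ kl]; rewrite leq_addl addnK.
  have -> : (k + i <= j)%N by lia.
  by rewrite addnC subnDA.
rewrite (_ : (j.+1 - i = (j - i).+1)%N); last by lia.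
rewrite big_mkord addrC exprDn mulr_suml.
apply: eq_bigr => [[k kl]] _ /=.
have kl' : (k <= j - i)%N by [].
rewrite -(bin_fact kl') !natrM.
set a := ((k`!)%:R : C); set b := (((j-i-k)`!)%:R : C).
have a0 : a != 0 by apply: fact_neq0.
have b0 : b != 0 by apply: fact_neq0.
rewrite -mulr_natr; field.
  by rewrite !fact_neq0 pnatr_eq0 -lt0n bin_gt0.
by lia.
Qed.

Lemma Emx_mul n x y : Emx n x *m Emx n y = Emx n (x + y).
Proof.
apply/matrixP => i j; rewrite !mxE.
under eq_bigr => k _ do rewrite !mxE.
case: (leqP i j) => ij; first exact: conv.
apply: big1 => k _.
case: (leqP i k) => ik; last by rewrite mul0r.
case: (leqP k j) => kj; last by rewrite mulr0.
by have := leq_ltn_trans (leq_trans ik kj) ij; rewrite ltnn.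
Qed.

Lemma Emx0 n : Emx n 0 = 1%:M.
Proof.
apply/matrixP => i j; rewrite !mxE.
case: (leqP i j) => ij.
  rewrite expr0n subn_eq0.
  case: (eqVneq i j) => [->|nij]; first by rewrite leqnn subnn /= divr1.
  have nij' : (i:nat) != j by exact: nij.
  have : ~~ (j <= i)%N by lia.
  by move/negbTE => ->; rewrite mul0r.
by case: eqP ij => [->|]; rewrite ?ltnn.
Qed.

Lemma Emx_unit n a : Emx n a \in unitmx.
Proof.
have := Emx_mul n a (- a); rewrite addrN Emx0 => /mulmx1_unit [] //.
Qed.

Lemma Emx_T n b (p : nat) : Emx n b *m Tsp p n = Tsp p n *m Emx n (p%:R * b).
Proof.
apply/matrixP => i j; rewrite !mxE.
rewrite (bigD1 j) //= [X in _ + X]big1 => [|k kj]; last by rewrite !mxE (negbTE kj) mulr0.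
rewrite (bigD1 i) //= [X in _ = _ + X]big1 => [|k ki]; last by rewrite !mxE eq_sym (negbTE ki) mul0r.
rewrite !mxE !eqxx !addr0.
case: (leqP i j) => ij; last by rewrite mul0r mulr0.
rewrite exprMn !mulrA -exprD subnKC //.
by rewrite mulrC !mulrA.
Qed.

Lemma Npow n k (i j : 'I_n.+1) : (Nmx n.+1 ^+ k) i j = ((j : nat) == i + k)%N%:R :> C.
Proof.
elim: k j => [|k IH] j.
  rewrite expr0.
  have -> : (1 : 'M[C]_n.+1) = 1%:M by [].
  by rewrite mxE addn0 eq_sym.
rewrite exprSr -mulmxE mxE.
under eq_bigr => l _ do rewrite IH mxE.
case: (eqVneq (j : nat) (i + k).+1) => ejk.
  have lt : (i + k < n.+1)%N by have := ltn_ord j; lia.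
  rewrite (bigD1 (Ordinal lt)) //= big1 => [|l nl].
    by rewrite eqxx ejk addnS eqxx mulr1 addr0.
  have : (l : nat) != (i + k)%N by exact: nl.
  by move/negbTE => ->; rewrite mul0r.
rewrite addnS (negbTE ejk); apply: big1 => l _.
by case: eqP => [e|]; rewrite ?mul0r // e (negbTE ejk) mulr0.
Qed.

Lemma expmx_eq n c : expmx (c *: Nmx n.+1) = Emx n.+1 c.
Proof.
apply/matrixP => i j; rewrite !mxE.
apply: (@climit_ev _ _ n.+1) => K HK.
rewrite summxE.
under eq_bigr => k _ do rewrite mxE exprZn mxE Npow.
case: (leqP i j) => ij.
  have lt : (j - i < K)%N by have := ltn_ord j; lia.
  rewrite (bigD1 (Ordinal lt)) //= big1 => [|k nk].
    rewrite subnKC // eqxx mulr1 addr0 mulrC.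
    by [].
  have : ((j : nat) == (i + k)%N) = false.
    apply/eqP => e; move: nk; rewrite -val_eqE /= e.
    by rewrite addKn eqxx.
  by move=> ->; rewrite !mulr0.
apply: big1 => k _.
have : ((j : nat) == (i + k)%N) = false by apply/eqP => e; move: ij; rewrite e; lia.
by move=> ->; rewrite !mulr0.
Qed.

Lemma Asp_eq (w1 w2 : C) p q n z :
  Asp w1 w2 p q n z = Tsp p n *m Emx n (gp w1 w2 p q z).
Proof.
apply/matrixP => i j; rewrite !mxE.
rewrite (bigD1 i) //= big1 => [|k ki]; last by rewrite !mxE eq_sym (negbTE ki) mul0r.
rewrite !mxE eqxx addr0.
case: (leqP i j) => ij; last by rewrite mulr0.
by rewrite mulrA mulrAC.
Qed.
End S.

Theorem lemma5p9 (R : realType) (w1 w2 : R[i]) (p q r : nat) :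
  is_lattice_basis w1 w2 -> (2 <= p)%N -> (2 <= q)%N -> (1 <= r)%N ->
  forall z : R[i], ~ in_lattice w1 w2 (p%:R * q%:R * z) ->
    Asp w1 w2 p q r z =
    Umx w1 w2 p q r (z / p%:R) *m Tsp p r *m invmx (Umx w1 w2 p q r z).
Proof.
move=> _ hp _; case: r => // r _ z _.
rewrite /Umx !expmx_eq Asp_eq Emx_T.
have p0 : (p%:R : R[i]) != 0 by rewrite pnatr_eq0 -lt0n (leq_trans _ hp).
have -> : (p%:R * q%:R * (z / p%:R) = q%:R * z :> R[i]) by field.
set a := wzeta w1 w2 (p%:R * q%:R * z).
have -> : Emx R r.+1 (p%:R * wzeta w1 w2 (q%:R * z)) = Emx R r.+1 (gp w1 w2 p q z) *m Emx R r.+1 a.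
  by rewrite Emx_mul /gp subrK.
by rewrite mulmxA mulmxK ?Emx_unit.
Qed.
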